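(* Fix $\vartheta_1\in(0,\pi/2)$. For an integer $k\ge0$, let $\eta_k$ be the unique solution of $\tan\eta=\eta$ in $[k\pi,k\pi+\pi/2)$ and $\eta_k'=\eta_k-k\pi$. If $\vartheta_1<\eta_k'$, then $$\Phi(\eta_{k+1})\ge\Phi(\eta_k)+\pi(1-\cos\vartheta_1).$$ In particular $\lim_{k\to\infty}\Phi(\eta_k)=\infty$.
   Context: For integers $k\ge0$ let $I_k=[\vartheta_1+k\pi,(k+1)\pi-\vartheta_1]$. For $\eta\in I_k$ set $\gamma(\eta)=\sqrt{1-\sin^2\vartheta_1/\sin^2\eta}$ and $$\Phi(\eta)=-\eta\,\gamma(\eta)+k\pi+\arccos\Big(\frac{\cos(\eta-k\pi)}{\cos\vartheta_1}\Big),\qquad\arccos\in[0,\pi].$$ (When $\vartheta_1<\eta_k'$, one has $\eta_k\in I_k$ and $\eta_{k+1}\in I_{k+1}$; $\Phi(\eta_k)$ is defined for all large $k$ since $\eta_k'\to\pi/2$.) *)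

(* Defs.v *)
From Stdlib Require Import Reals Lra.
From Coquelicot Require Import Coquelicot.
Open Scope R_scope.

Definition gammaf (theta1 eta : R) : R :=
  sqrt (1 - (sin theta1) ^ 2 / (sin eta) ^ 2).

(* Phi on the interval I_k = [theta1 + k pi, (k+1) pi - theta1];
   the index k is an explicit argument.  acos is Stdlib's arccos, values in [0,PI]. *)
Definition Phi (theta1 : R) (k : nat) (eta : R) : R :=
  - eta * gammaf theta1 eta + INR k * PI
  + acos (cos (eta - INR k * PI) / cos theta1).

Definition is_eta_k (k : nat) (eta : R) : Prop :=
  INR k * PI <= eta < INR k * PI + PI / 2 /\ tan eta = eta.

(* Main.v *)
Require Import Defs.
From Stdlib Require Import Reals Lra Lia ZArith.
From Coquelicot Require Import Coquelicot.
Open Scope R_scope.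

Definition Tf (c s t : R) := sqrt (c*c*t*t - s*s).
Definition Df (c s t : R) := Tf c s t - atan (Tf c s t) - c * (t - atan t).

Lemma Df_decr c s t1 t2 : 0 < c -> 0 < s -> c*c + s*s = 1 -> s / c < t1 -> t1 < t2 ->
  Df c s t2 < Df c s t1.
Proof.
intros Hc Hs Hcs H1 H12.
assert (key: forall t, s / c < t -> 0 < t /\ 0 < c*c*t*t - s*s).
{ intros t Ht. assert (0 < s / c) by (apply Rdiv_lt_0_compat; lra).
  assert (s < c * t). { apply (Rmult_lt_compat_l c) in Ht; auto.
    replace (c * (s/c)) with s in Ht by (field; lra). lra. }
  split. lra. nra. }
cut (- Df c s t1 < - Df c s t2). lra.
apply (incr_function (fun t => - Df c s t) (Finite (s / c)) p_infty
   (fun t => t * (c*t - Tf c s t) / (1 + t*t))); simpl; auto; try lra.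
- intros t Ht _. destruct (key t Ht) as [Ht0 HQ].
  unfold Df, Tf. auto_derive. lra.
  set (S := sqrt (c * c * t * t + - (s * s))).
  assert (HS : S * S = c*c*t*t - s*s). { unfold S. rewrite sqrt_sqrt; lra. }
  assert (HSp : 0 < S). { unfold S. apply sqrt_lt_R0. lra. }
  replace (c * c * t * t - s * s) with (c * c * t * t + - (s * s)) by ring.
  fold S.
  replace (S * (S * 1)) with (c*c*t*t - s*s) by lra.
  replace (/ (2 * S)) with (S / (2 * (c*c*t*t - s*s))) by (rewrite <- HS; field; lra).
  replace (s*s) with (1 - c*c) by lra.
  field. repeat split; nra.
- intros t Ht _. destruct (key t Ht) as [Ht0 HQ].
  apply Rdiv_lt_0_compat; [|nra]. apply Rmult_lt_0_compat; auto.
  unfold Tf. rewrite <- (sqrt_pow2 (c*t)) by nra.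
  cut (sqrt (c * c * t * t - s * s) < sqrt ((c * t) ^ 2)). lra.
  apply sqrt_lt_1_alt. nra.
Qed.

Lemma shift k a : (sin (a + INR k * PI) = sin a /\ cos (a + INR k * PI) = cos a) \/
                  (sin (a + INR k * PI) = - sin a /\ cos (a + INR k * PI) = - cos a).
Proof.
induction k.
- simpl. left. rewrite Rmult_0_l, Rplus_0_r. auto.
- rewrite S_INR. replace (a + (INR k + 1) * PI) with ((a + INR k * PI) + PI) by ring.
  rewrite neg_sin, neg_cos. destruct IHk as [[-> ->]|[-> ->]]; [right|left]; split; ring.
Qed.

Lemma sq_eq x q : 0 <= x -> x ^ 2 = q -> x = sqrt q.
Proof. intros Hx <-. rewrite sqrt_pow2; auto. Qed.

Lemma eta_props k e : is_eta_k k e ->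
  0 <= e - INR k * PI < PI / 2 /\ tan (e - INR k * PI) = e /\ atan e = e - INR k * PI
  /\ (sin e) ^ 2 = (sin (e - INR k * PI)) ^ 2.
Proof.
intros [[H1 H2] Ht].
set (a := e - INR k * PI).
assert (Ha : 0 <= a < PI / 2) by (unfold a; lra).
assert (Hea : e = a + INR k * PI) by (unfold a; ring).
assert (Hca : 0 < cos a) by (apply cos_gt_0; lra).
assert (Htan : tan a = e).
{ rewrite <- Ht, Hea. unfold tan.
  destruct (shift k a) as [[-> ->]|[-> ->]]. auto. field. lra. }
repeat split; try lra.
- rewrite <- Htan. apply atan_tan. lra.
- rewrite Hea. destruct (shift k a) as [[-> _]|[-> _]]; ring.
Qed.

Lemma Phi_eq th k e : 0 < th < PI / 2 -> is_eta_k k e -> th < e - INR k * PI ->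
  Phi th k e = INR k * PI - Tf (cos th) (sin th) e + atan (Tf (cos th) (sin th) e).
Proof.
intros Hth He Hlt. unfold Phi, gammaf.
destruct (eta_props k e He) as [Ha [Htan [Hatan Hsin]]].
set (a := e - INR k * PI) in *.
set (c := cos th). set (s := sin th).
assert (PI2 : 0 < PI) by apply PI_RGT_0.
assert (Hc : 0 < c) by (apply cos_gt_0; lra).
assert (Hs : 0 < s) by (apply sin_gt_0; lra).
assert (Hca : 0 < cos a) by (apply cos_gt_0; lra).
assert (Hcl : cos a < c) by (apply cos_decreasing_1; lra).
assert (Hsl : s < sin a) by (apply sin_increasing_1; lra).
assert (Hcs : c*c + s*s = 1) by (unfold c, s; pose proof (sin2_cos2 th) as HH; unfold Rsqr in HH; lra).
assert (Hcsa : cos a * cos a + sin a * sin a = 1) by (pose proof (sin2_cos2 a); unfold Rsqr in *; lra).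
assert (He2 : e = sin a / cos a) by (rewrite <- Htan; reflexivity).
assert (He0 : 0 <= e) by (rewrite He2; apply Rmult_le_pos; [lra| left; apply Rinv_0_lt_compat; lra]).
assert (HQ : c*c*e*e - s*s = (sin a * sin a - s * s) / (cos a * cos a)).
{ rewrite He2. replace (c*c) with (1 - s*s) by lra.
  apply Rminus_diag_uniq.
  transitivity (s*s*(1 - (cos a * cos a + sin a * sin a)) / (cos a * cos a)).
  field. lra. rewrite Hcsa. field. lra. }
assert (E1 : e * sqrt (1 - s ^ 2 / sin e ^ 2) = Tf c s e).
{ unfold Tf. apply sq_eq.
  - apply Rmult_le_pos; auto. apply sqrt_pos.
  - rewrite Rpow_mult_distr, pow2_sqrt. rewrite HQ, Hsin. rewrite He2 at 1. field. split; lra.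
    rewrite Hsin. cut (s ^ 2 / sin a ^ 2 <= 1). lra.
    replace (s ^ 2 / sin a ^ 2) with ((s/sin a)^2) by (field; lra).
    replace 1 with (1 ^ 2) by ring. apply pow_incr. split.
    left; apply Rdiv_lt_0_compat; lra.
    apply (Rmult_le_reg_r (sin a)); [lra|]. unfold Rdiv. rewrite Rmult_assoc, Rinv_l; lra. }
assert (E2 : acos (cos a / c) = atan (Tf c s e)).
{ rewrite acos_atan by (apply Rdiv_lt_0_compat; lra). f_equal. unfold Tf.
  assert (Hu : cos a / c < 1) by (apply (Rmult_lt_reg_r c); [lra|]; unfold Rdiv; rewrite Rmult_assoc, Rinv_l; lra).
  assert (Hu0 : 0 < cos a / c) by (apply Rdiv_lt_0_compat; lra).
  apply sq_eq.
  - apply Rmult_le_pos. apply sqrt_pos. left. apply Rinv_0_lt_compat. lra.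
  - unfold Rdiv at 1. rewrite Rpow_mult_distr, pow2_sqrt. rewrite HQ. unfold Rsqr.
    replace (sin a * sin a) with (1 - cos a * cos a) by lra.
    replace (s * s) with (1 - c * c) by lra. field. lra.
    unfold Rsqr. nra. }
rewrite E2, <- E1. ring.
Qed.

Lemma step th k (eta : nat -> R) : 0 < th < PI / 2 -> (forall k, is_eta_k k (eta k)) ->
  th < eta k - INR k * PI ->
  Phi th (S k) (eta (S k)) > Phi th k (eta k) + PI * (1 - cos th).
Proof.
intros Hth He Hlt.
assert (PI2 : 0 < PI) by apply PI_RGT_0.
destruct (eta_props k (eta k) (He k)) as [Ha [Htan [Hatan Hsin]]].
destruct (eta_props (S k) (eta (S k)) (He (S k))) as [Hb [Htanb [Hatanb Hsinb]]].
pose proof (He k) as [[A1 A2] _]. pose proof (He (S k)) as [[B1 B2] _].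
rewrite S_INR in *.
assert (Hlt12 : eta k < eta (S k)) by nra.
assert (Hab : eta k - INR k * PI < eta (S k) - (INR k + 1) * PI).
{ rewrite <- Hatan, <- Hatanb. apply atan_increasing. auto. }
rewrite (Phi_eq th k) by auto.
rewrite (Phi_eq th (S k)) by (auto; rewrite S_INR; lra).
rewrite S_INR.
set (c := cos th). set (s := sin th).
assert (Hc : 0 < c) by (apply cos_gt_0; lra).
assert (Hs : 0 < s) by (apply sin_gt_0; lra).
assert (Hcs : c*c + s*s = 1) by (unfold c, s; pose proof (sin2_cos2 th) as HH; unfold Rsqr in HH; lra).
assert (Ht1 : s / c < eta k).
{ rewrite <- Htan. replace (s / c) with (tan th) by reflexivity.
  apply tan_increasing; lra. }
pose proof (Df_decr c s (eta k) (eta (S k)) Hc Hs Hcs Ht1 Hlt12) as HD.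
unfold Df in HD. rewrite Hatan, Hatanb in HD.
assert (c * (eta (S k) - (eta (S k) - (INR k + 1) * PI)) = c * (eta k - (eta k - INR k * PI)) + c * PI) by ring.
assert (PI * (1 - c) = PI - c * PI) by ring.
lra.
Qed.

Lemma nat_unbounded x : exists n, x < INR n.
Proof.
destruct (archimed (Rabs x)) as [H _].
assert (0 < IZR (up (Rabs x))) by (pose proof (Rabs_pos x); lra).
apply lt_0_IZR in H0.
exists (Z.to_nat (up (Rabs x))). rewrite INR_IZR_INZ, Z2Nat.id by lia.
pose proof (Rle_abs x). lra.
Qed.

Theorem corollary5p28 (theta1 : R) (eta : nat -> R) :
  0 < theta1 < PI / 2 ->
  (forall k : nat, is_eta_k k (eta k)) ->
  (forall k : nat, theta1 < eta k - INR k * PI ->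
     Phi theta1 (S k) (eta (S k)) >= Phi theta1 k (eta k) + PI * (1 - cos theta1))
  /\ is_lim_seq (fun k : nat => Phi theta1 k (eta k)) p_infty.
Proof.
intros Hth He.
split.
{ intros k Hk. left. apply step; auto. }
assert (PI2 : 0 < PI) by apply PI_RGT_0.
set (d := PI * (1 - cos theta1)).
assert (Hd : 0 < d).
{ unfold d. apply Rmult_lt_0_compat; auto.
  assert (cos theta1 < cos 0) by (apply cos_decreasing_1; lra). rewrite cos_0 in H. lra. }
destruct (nat_unbounded (tan theta1 / PI)) as [K HK].
assert (HK' : tan theta1 < INR K * PI).
{ apply (Rmult_lt_compat_r PI) in HK; auto. unfold Rdiv in HK.
  rewrite Rmult_assoc, Rinv_l in HK; lra. }
assert (Hgood : forall k, (K <= k)%nat -> theta1 < eta k - INR k * PI).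
{ intros k Hk. destruct (eta_props k (eta k) (He k)) as [_ [_ [Hat _]]].
  rewrite <- Hat. pose proof (He k) as [[A1 _] _].
  apply le_INR in Hk.
  rewrite <- (atan_tan theta1) at 1 by lra. apply atan_increasing. nra. }
set (u := fun k => Phi theta1 k (eta k)).
assert (Hgrow : forall n, u K + INR n * d <= u (K + n)%nat).
{ induction n.
  - simpl. rewrite Nat.add_0_r. lra.
  - rewrite S_INR, Nat.add_succ_r.
    pose proof (step theta1 (K + n) eta Hth He (Hgood (K + n)%nat ltac:(lia))). assert (u (S (K+n)) > u (K+n)%nat + d) by exact H. nra. }
apply is_lim_seq_spec. intros M.
destruct (nat_unbounded ((M - u K) / d)) as [n0 Hn0].
exists (K + n0)%nat. intros n Hn.
replace n with (K + (n - K))%nat by lia.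
pose proof (Hgrow (n - K)%nat).
assert (INR n0 <= INR (n - K)) by (apply le_INR; lia).
assert ((M - u K) < INR n0 * d).
{ apply (Rmult_lt_compat_r d) in Hn0; auto. unfold Rdiv in Hn0.
  rewrite Rmult_assoc, Rinv_l in Hn0; lra. }
fold u. nra.
Qed.
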